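(* Let $G$ be a finite group with $O^p(G)=G$, let $k$ be a field of characteristic $p$, and let $M$ be a $kG$-module such that, for every composition factor $V$ of $M$, $\dim H^1(G,V)=\dim H^1(G,V^* )$. Suppose that $M$ contains trivial composition factors, but no trivial submodule and no trivial quotient. If $M$ has pressure $n$, then there is no subquotient $A$ of $M$ with pressure greater than $n$ or less than $-n$. In particular, if a module $M$ satisfying the hypotheses on $G$, $k$ and the composition factors has a trivial composition factor but non-positive pressure, then $M$ has a trivial submodule or quotient; and if such an $M$ has a composition factor $V$ whose $1$-cohomology has dimension greater than the pressure of $M$, then $M$ has a trivial submodule or quotient.
   Context: For a finite group $G$ with $H^1(G,k)=0$ (i.e. $O^p(G)=G$) and a $kG$-module $M$ all of whose composition factors $V$ satisfy $\dim H^1(G,V)=\dim H^1(G,V^* )$, the pressure of $M$ is defined as $\sum_{V} (\dim H^1(G,V)-\delta_{V,k})$, where the sum runs over the multiset of composition factors $V$ of $M$ (counted with multiplicity) and $\delta_{V,k}$ is $1$ if $V$ is the trivial module $k$ and $0$ otherwise. The same definition applies to any subquotient $A$ of $M$. *)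

(* Defs.v *)
From HB Require Import structures.
From mathcomp Require Import all_boot all_order all_algebra all_fingroup all_solvable.
From mathcomp Require Import mxrepresentation.
Set Implicit Arguments.
Unset Strict Implicit.
Unset Printing Implicit Defensive.
Import GRing.Theory.
Local Open Scope ring_scope.

Section Defs.
Variables (F : fieldType) (gT : finGroupType).

Definition Oup (p : nat) (G : {set gT}) : {set gT} :=
  <<[set x in G | p^'.-elt x]>>%g.

Section H1.
Variables (G : {set gT}) (m : nat) (r : gT -> 'M[F]_m).

(* 1-cochains G -> V (right module V = 'rV_m, g acting by v *m r g),
   encoded as functions on gT; the map below measures the failure of the
   crossed-homomorphism identity f(gh) = f(g) h + f(h) on G x G. *)
Definition cocycle_defect (f : {ffun gT -> 'rV[F]_m}) : {ffun gT * gT -> 'rV[F]_m} :=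
  [ffun xy => if (xy.1 \in G) && (xy.2 \in G)
              then f (xy.1 * xy.2)%g - (f xy.1 *m r xy.2 + f xy.2) else 0].

(* cochains are supported on G *)
Definition off_support (f : {ffun gT -> 'rV[F]_m}) : {ffun gT -> 'rV[F]_m} :=
  [ffun x => if x \in G then 0 else f x].

Definition Z1 : {vspace {ffun gT -> 'rV[F]_m}} :=
  (lker (linfun cocycle_defect) :&: lker (linfun off_support))%VS.

Definition coboundary (v : 'rV[F]_m) : {ffun gT -> 'rV[F]_m} :=
  [ffun x => if x \in G then v *m r x - v else 0].

Definition B1 : {vspace {ffun gT -> 'rV[F]_m}} := limg (linfun coboundary).

Definition H1dim : nat := (\dim Z1 - \dim B1)%N.

End H1.

Definition dual_mx (m : nat) (r : gT -> 'M[F]_m) : gT -> 'M[F]_m :=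
  fun x => (r (x^-1)%g)^T.

Section Modules.
Variables (G : {group gT}).

Definition is_trivial_repr (d : nat) (r : mx_representation F G d) : bool :=
  (d == 1)%N && [forall x in G, r x == 1%:M].

Variables (n : nat) (rG : mx_representation F G n).

Definition full_series (Us : seq 'M[F]_n) : bool := (last 0 Us == 1%:M)%MS.

Definition series_pressure (Us : seq 'M[F]_n)
    (cs : mx_composition_series rG Us) : int :=
  \sum_(i < size Us)
     ((H1dim G (series_repr i cs))%:Z - (is_trivial_repr (series_repr i cs))%:Z).

Definition factors_H1_selfdual : Prop :=
  forall (Us : seq 'M[F]_n) (cs : mx_composition_series rG Us),
    full_series Us -> forall i : nat, (i < size Us)%N ->
    H1dim G (series_repr i cs) = H1dim G (dual_mx (series_repr i cs)).

Definition has_trivial_factor : Prop :=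
  exists (Us : seq 'M[F]_n) (cs : mx_composition_series rG Us),
    full_series Us /\ exists2 i : nat, (i < size Us)%N
                                   & is_trivial_repr (series_repr i cs).

Definition has_trivial_submodule : Prop :=
  exists (U : 'M[F]_n) (modU : mxmodule rG U), is_trivial_repr (submod_repr modU).

Definition has_trivial_quotient : Prop :=
  exists (U : 'M[F]_n) (modU : mxmodule rG U), is_trivial_repr (factmod_repr modU).

End Modules.
End Defs.

(* Main.v *)
From Pilot Require Import Defs.
From HB Require Import structures.
From mathcomp Require Import all_boot all_order all_algebra all_fingroup all_solvable.
From mathcomp Require Import mxrepresentation.
From mathcomp Require Import zify.
From Stdlib Require Import Classical.
Import GRing.Theory Num.Theory.
Local Open Scope ring_scope.

Module PilotHelpers.
Set Implicit Arguments. Unset Strict Implicit. Unset Printing Implicit Defensive.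
Import Order.TTheory GRing.Theory Num.Theory.

Section Lin.
Variables (F : fieldType) (gT : finGroupType) (G : {group gT}).

Section R.
Variables (m : nat) (r : gT -> 'M[F]_m).

Fact cocycle_defect_lin : linear (cocycle_defect G r).
Proof.
move=> a f g; apply/ffunP=> xy; rewrite /cocycle_defect !ffunE.
case: ifP => _; last by rewrite scaler0 addr0.
rewrite mulmxDl -scalemxAl scalerBr scalerDr !opprD !addrA; congr (_ - _); rewrite -!addrA; congr (_ + _); rewrite addrC -!addrA; congr (_ + _); by rewrite addrC -!addrA addrC -!addrA.
Qed.
HB.instance Definition _ := GRing.isLinear.Build F _ _ _ (cocycle_defect G r) cocycle_defect_lin.

Fact off_support_lin : linear (@off_support F gT G m).
Proof.
move=> a f g; apply/ffunP=> x; rewrite /off_support !ffunE.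
by case: ifP => _; rewrite ?scaler0 ?addr0.
Qed.
HB.instance Definition _ := GRing.isLinear.Build F _ _ _ (@off_support F gT G m) off_support_lin.

Fact coboundary_lin : linear (coboundary G r).
Proof.
move=> a u v; apply/ffunP=> x; rewrite /coboundary !ffunE.
case: ifP => _; last by rewrite scaler0 addr0.
rewrite mulmxDl -scalemxAl scalerBr opprD !addrA; congr (_ - _); rewrite -!addrA; congr (_ + _); by rewrite addrC.
Qed.
HB.instance Definition _ := GRing.isLinear.Build F _ _ _ (coboundary G r) coboundary_lin.

Lemma memZ1P (f : {ffun gT -> 'rV[F]_m}) : reflect
  ((forall x y, x \in G -> y \in G -> f (x * y)%g = f x *m r y + f y)
    /\ (forall x, x \notin G -> f x = 0)) (f \in Z1 G r).
Proof.
rewrite /Z1 memv_cap !memv_ker !lfunE /=; apply: (iffP andP).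
  case=> /eqP/ffunP H1 /eqP/ffunP H2; split.
    move=> x y Gx Gy; have := H1 (x, y); rewrite !ffunE /= Gx Gy /= => /eqP.
    by rewrite subr_eq0 => /eqP.
  by move=> x nGx; have := H2 x; rewrite !ffunE (negbTE nGx).
case=> H1 H2; split; apply/eqP/ffunP.
  case=> x y; rewrite !ffunE /=; case: ifP => // /andP[Gx Gy].
  by rewrite H1 // subrr.
by move=> x; rewrite !ffunE; case: ifPn => // /H2.
Qed.

Definition zdim := \dim (Z1 G r).
Definition fixdim := \dim (lker (linfun (coboundary G r))).

Lemma dim_fullv : \dim (fullv : {vspace 'rV[F]_m}) = m.
Proof. by rewrite dimvf /dim /= mul1n. Qed.

Lemma fix_B1_dim : (fixdim + \dim (B1 G r))%N = m.
Proof.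
by rewrite -[RHS]dim_fullv -(limg_ker_dim (linfun (coboundary G r)) fullv) capfv.
Qed.

Lemma B1_dim : \dim (B1 G r) = (m - fixdim)%N.
Proof. by have := fix_B1_dim; move: (\dim (B1 G r)) fixdim => b a H; apply/eqP; rewrite -(eqn_add2l a) H subnKC // -H leq_addr. Qed.

Lemma fixdim_le : (fixdim <= m)%N.
Proof. by have := fix_B1_dim; move: (\dim (B1 G r)) fixdim => b a H; apply: leq_trans (leq_addr b a) _; rewrite H. Qed.

Lemma memfixP v : reflect (forall x, x \in G -> v *m r x = v)
  (v \in lker (linfun (coboundary G r))).
Proof.
rewrite memv_ker lfunE /=; apply: (iffP eqP).
  move/ffunP=> H x Gx; have := H x; rewrite !ffunE Gx => /eqP.
  by rewrite subr_eq0 => /eqP.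
move=> H; apply/ffunP=> x; rewrite !ffunE; case: ifP => // Gx.
by rewrite H // subrr.
Qed.

Hypothesis rM : forall x y, x \in G -> y \in G -> r (x * y)%g = r x *m r y.

Lemma B1_sub_Z1 : (B1 G r <= Z1 G r)%VS.
Proof.
apply/subvP=> f /memv_imgP[v _ ->]; rewrite lfunE /=.
apply/memZ1P; split=> [x y Gx Gy|x nGx]; rewrite !ffunE; last first.
  by rewrite (negbTE nGx).
have Gxy : (x * y)%g \in G by rewrite groupM.
by rewrite Gx Gy Gxy rM // mulmxBl mulmxA addrA subrK.
Qed.

End R.
End Lin.


Section L1.
Variables (F : fieldType) (gT : finGroupType) (G : {group gT}).

Definition cmul (d1 d2 : nat) (A : 'M[F]_(d1,d2)) (f : {ffun gT -> 'rV[F]_d1}) :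
  {ffun gT -> 'rV[F]_d2} := [ffun x => f x *m A].
Fact cmul_lin d1 d2 (A : 'M[F]_(d1,d2)) : linear (cmul A).
Proof. by move=> a f g; apply/ffunP=> x; rewrite !ffunE mulmxDl scalemxAl. Qed.
HB.instance Definition _ d1 d2 A := GRing.isLinear.Build F _ _ _ (@cmul d1 d2 A) (cmul_lin A).

Lemma zdim_exact (d da db : nat) (r : gT -> 'M[F]_d) (ra : gT -> 'M[F]_da)
   (rb : gT -> 'M[F]_db) (I : 'M[F]_(db,d)) (P : 'M[F]_(d,da)) :
  row_free I -> (forall v : 'rV_d, v *m P = 0 -> (v <= I)%MS) ->
  (forall x, x \in G -> I *m r x = rb x *m I) ->
  (forall x, x \in G -> r x *m P = P *m ra x) ->
  (zdim G r <= zdim G rb + zdim G ra)%N.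
Proof.
move=> freeI kerP homI homP.
set Phi := linfun (cmul P); set Psi := linfun (cmul I).
rewrite /zdim -(limg_ker_dim Phi (Z1 G r)) leq_add //; last first.
  apply: dimvS; apply/subvP=> _ /memv_imgP[f /memZ1P[H1 H2] ->].
  rewrite lfunE /=; apply/memZ1P; split=> [x y Gx Gy|x nGx]; rewrite !ffunE.
    by rewrite H1 // mulmxDl -!mulmxA homP.
  by rewrite H2 // mul0mx.
apply: leq_trans (_ : \dim (Psi @: Z1 G rb) <= _)%N; last first.
  by rewrite -(limg_ker_dim Psi (Z1 G rb)) leq_addl.
apply: dimvS; apply/subvP=> f /memv_capP[/memZ1P[H1 H2]].
rewrite memv_ker lfunE /= => /eqP/ffunP HP.
have fI x : (f x <= I)%MS by apply: kerP; have := HP x; rewrite !ffunE.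
pose g := [ffun x => f x *m pinvmx I].
have gI x : g x *m I = f x by rewrite ffunE mulmxKpV.
apply/memv_imgP; exists g.
  apply/memZ1P; split=> [x y Gx Gy|x nGx].
    apply: (row_free_inj freeI); rewrite /= gI H1 // mulmxDl -mulmxA -homI //.
    by rewrite mulmxA !gI.
  by rewrite ffunE H2 // mul0mx.
by apply/ffunP=> x; rewrite lfunE /= ffunE gI.
Qed.
End L1.


Section Reps.
Variables (F : fieldType) (gT : finGroupType) (G : {group gT}).

Lemma zdim0 (r : gT -> 'M[F]_0) : zdim G r = 0%N.
Proof.
apply/eqP; rewrite -leqn0; apply: leq_trans (dimvS (subvf _)) _.
by rewrite dimvf /dim /= muln0.
Qed.

Lemma zdim_sim d (r1 r2 : gT -> 'M[F]_d) (B : 'M[F]_d) : B \in unitmx ->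
  (forall x, x \in G -> r1 x *m B = B *m r2 x) -> (zdim G r1 <= zdim G r2)%N.
Proof.
move=> uB hom.
have := @zdim_exact F gT G d d 0 r1 r2 (fun _ => 0) 0 B.
rewrite zdim0 add0n; apply.
- by rewrite /row_free mxrank0.
- move=> v vB; have -> : v = 0.
    by apply: (row_free_inj (_ : row_free B)); rewrite ?row_free_unit // vB mul0mx.
  exact: sub0mx.
- by move=> x _; apply/matrixP=> [[]].
- exact: hom.
Qed.

Lemma zdim_rsim_le n1 n2 (r1 : mx_representation F G n1) (r2 : mx_representation F G n2) :
  mx_rsim r1 r2 -> (zdim G r1 <= zdim G r2)%N.
Proof.
case=> B def_n1; subst n1; rewrite row_free_unit => uB hom.
exact: zdim_sim uB hom.
Qed.

Lemma zdim_rsim n1 n2 (r1 : mx_representation F G n1) (r2 : mx_representation F G n2) :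
  mx_rsim r1 r2 -> zdim G r1 = zdim G r2.
Proof.
move=> s; apply/eqP; rewrite eqn_leq !zdim_rsim_le //; exact: mx_rsim_sym.
Qed.

Lemma zdim_dual_rsim_le n1 n2 (r1 : mx_representation F G n1) (r2 : mx_representation F G n2) :
  mx_rsim r1 r2 -> (zdim G (dual_mx r2) <= zdim G (dual_mx r1))%N.
Proof.
case=> B def_n1; subst n1; rewrite row_free_unit => uB hom.
apply: (zdim_sim (B := B^T)); first by rewrite unitmx_tr.
move=> x Gx; rewrite /dual_mx -!trmx_mul hom // ?groupV //. 
Qed.

Lemma zdim_dual_rsim n1 n2 (r1 : mx_representation F G n1) (r2 : mx_representation F G n2) :
  mx_rsim r1 r2 -> zdim G (dual_mx r1) = zdim G (dual_mx r2).
Proof.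
move=> s; apply/eqP; rewrite eqn_leq !zdim_dual_rsim_le //; exact: mx_rsim_sym.
Qed.

Lemma triv_rsim n1 n2 (r1 : mx_representation F G n1) (r2 : mx_representation F G n2) :
  mx_rsim r1 r2 -> is_trivial_repr r1 = is_trivial_repr r2.
Proof.
suff H: forall n1 n2 (r1 : mx_representation F G n1) (r2 : mx_representation F G n2),
  mx_rsim r1 r2 -> is_trivial_repr r1 -> is_trivial_repr r2.
  by move=> s; apply/idP/idP; apply: H => //; apply: mx_rsim_sym.
move=> {}n1 {}n2 {}r1 {}r2 s /andP[/eqP e1 /forall_inP t1]; apply/andP; split.
  by rewrite -(mxrank_rsim s) e1.
apply/forall_inP=> x Gx; apply/eqP; apply: (mx_rsim_scalar Gx s).
exact/eqP/t1.
Qed.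

Lemma dual_repr_mxM m (r : mx_representation F G m) x y : x \in G -> y \in G ->
  dual_mx r (x * y)%g = dual_mx r x *m dual_mx r y.
Proof.
move=> Gx Gy; rewrite /dual_mx invMg repr_mxM ?groupV // trmx_mul //.
Qed.

Lemma H1dim_formula m (r : gT -> 'M[F]_m) :
  (forall x y, x \in G -> y \in G -> r (x * y)%g = r x *m r y) ->
  (H1dim G r)%:Z = (zdim G r)%:Z - m%:Z + (fixdim G r)%:Z.
Proof.
move=> rM.
have h1 : (\dim (B1 G r) <= \dim (Z1 G r))%N := dimvS (B1_sub_Z1 rM).
have h2 := B1_dim G r; have h3 := fixdim_le G r.
rewrite /H1dim /zdim; move: h1 h2 h3.
move: (\dim (Z1 G r) : nat) (\dim (B1 G r) : nat) (fixdim G r : nat) => a b c h1 h2 h3; subst b.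
lia.
Qed.

Lemma fixdim_irr m (rV : mx_representation F G m) :
  mx_irreducible rV -> fixdim G rV = is_trivial_repr rV.
Proof.
case/mx_irrP=> m_gt0 irrP; rewrite /fixdim.
case: (boolP (is_trivial_repr rV)) => [/andP[/eqP m1 /forall_inP t]|nt].
  have ->: lker (linfun (coboundary G rV)) = fullv.
    apply/eqP; rewrite eqEsubv subvf /=; apply/subvP=> v _.
    by apply/memfixP=> x Gx; rewrite (eqP (t x Gx)) mulmx1.
  by rewrite dim_fullv m1.
apply/eqP; rewrite dimv_eq0; apply/eqP/vspaceP=> v; rewrite memv0.
apply/idP/eqP=> [/memfixP fv|->]; last exact: mem0v.
apply/eqP/negPn/negP => nz.
have modv : mxmodule rV v by apply/mxmoduleP=> x Gx; rewrite fv.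
have modv' : mxmodule rV <<v>>%MS by rewrite (eqmx_module _ (genmxE v)).
have nz' : <<v>>%MS != 0 by rewrite -mxrank_eq0 genmxE mxrank_eq0.
have fullv : row_full v by rewrite /row_full -genmxE; exact: irrP modv' nz'.
case/row_fullP: (fullv) => B Bv.
case/negP: nt; apply/andP; split.
  have := rank_leq_row v; move: fullv; rewrite /row_full => /eqP ->.
  by move: m_gt0; case: (m) => [|[]].
apply/forall_inP=> x Gx; apply/eqP.
by rewrite -[rV x]mul1mx -Bv -mulmxA fv.
Qed.

Lemma fixdim_dual_irr m (rV : mx_representation F G m) :
  mx_irreducible rV -> fixdim G (dual_mx rV) = is_trivial_repr rV.
Proof.
case/mx_irrP=> m_gt0 irrP; rewrite /fixdim.
case: (boolP (is_trivial_repr rV)) => [/andP[/eqP m1 /forall_inP t]|nt].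
  have ->: lker (linfun (coboundary G (dual_mx rV))) = fullv.
    apply/eqP; rewrite eqEsubv subvf /=; apply/subvP=> v _.
    apply/memfixP=> x Gx; rewrite /dual_mx (eqP (t _ _)) ?groupV //.
    by rewrite trmx1 mulmx1.
  by rewrite dim_fullv m1.
apply/eqP; rewrite dimv_eq0; apply/eqP/vspaceP=> w; rewrite memv0.
apply/idP/eqP=> [/memfixP fw|->]; last exact: mem0v.
have rc y : y \in G -> rV y *m w^T = w^T.
  move=> Gy; have := fw (y^-1)%g; rewrite groupV /dual_mx invgK => /(_ Gy) e.
  by rewrite -{2}e trmx_mul trmxK.
have modK : mxmodule rV (kermx w^T).
  apply/mxmoduleP=> x Gx; apply/sub_kermxP.
  by rewrite -mulmxA rc // mulmx_ker.
case: (eqVneq (kermx w^T) 0) => [K0|nzK].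
  have fr : row_free w^T by rewrite -kermx_eq0 K0.
  case/negP: nt.
  apply/andP; split.
    have := rank_leq_col w^T; move: fr; rewrite /row_free => /eqP ->.
    by move: m_gt0; case: (m) => [|[]].
  apply/forall_inP=> x Gx; apply/eqP; apply: (row_free_inj fr).
  by rewrite /= rc // mul1mx.
case/row_fullP: (irrP _ modK nzK) => B BK.
apply: trmx_inj; rewrite trmx0 -[w^T]mul1mx -BK -mulmxA mulmx_ker mulmx0 //.
Qed.

Definition pf m (r : gT -> 'M[F]_m) : int := (zdim G r)%:Z - m%:Z.

Lemma H1_irr m (rV : mx_representation F G m) : mx_irreducible rV ->
  (H1dim G rV)%:Z - (is_trivial_repr rV)%:Z = pf rV.
Proof.
move=> irr; rewrite H1dim_formula; last by move=> x y Gx Gy; rewrite repr_mxM.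
by rewrite fixdim_irr // addrK.
Qed.

Lemma H1_dual_irr m (rV : mx_representation F G m) : mx_irreducible rV ->
  (H1dim G (dual_mx rV))%:Z - (is_trivial_repr rV)%:Z = pf (dual_mx rV).
Proof.
move=> irr; rewrite H1dim_formula; last by move=> x y Gx Gy; rewrite dual_repr_mxM.
by rewrite fixdim_dual_irr // addrK.
Qed.

End Reps.


Section Exact.
Variables (F : fieldType) (gT : finGroupType) (G : {group gT}).

Lemma ker_exact d da db (I : 'M[F]_(db,d)) (P : 'M[F]_(d,da)) :
  row_free I -> I *m P = 0 -> (db + \rank P)%N = d ->
  forall v : 'rV_d, v *m P = 0 -> (v <= I)%MS.
Proof.
move=> frI IP0 dE v vP.
have sIK : (I <= kermx P)%MS by apply/sub_kermxP.
have rK : \rank (kermx P) = \rank I.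
  rewrite mxrank_ker (eqP frI); have h1 := rank_leq_row P; move: dE h1.
  move: (\rank P) => p; lia.
have sKI : (kermx P <= I)%MS.
  by have := mxrank_leqif_sup sIK; rewrite rK => /leqif_refl.
by apply: submx_trans sKI; apply/sub_kermxP.
Qed.

Variables (d da db : nat) (r : gT -> 'M[F]_d) (ra : gT -> 'M[F]_da)
   (rb : gT -> 'M[F]_db) (I : 'M[F]_(db,d)) (P : 'M[F]_(d,da)).
Hypotheses (frI : row_free I) (flP : row_full P) (IP0 : I *m P = 0)
   (dE : (db + da)%N = d)
   (homI : forall x, x \in G -> I *m r x = rb x *m I)
   (homP : forall x, x \in G -> r x *m P = P *m ra x).

Lemma pf_exact : pf G r <= pf G rb + pf G ra.
Proof.
have e : (db + \rank P)%N = d by rewrite (eqP flP).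
have h := zdim_exact frI (ker_exact frI IP0 e) homI homP.
rewrite /pf; move: h dE.
move: (zdim G r : nat) (zdim G rb : nat) (zdim G ra : nat) => a b c; lia.
Qed.

Lemma pf_exact_dual : pf G (dual_mx r) <= pf G (dual_mx ra) + pf G (dual_mx rb).
Proof.
have frP : row_free P^T by rewrite /row_free mxrank_tr.
have P0 : P^T *m I^T = 0 by rewrite -trmx_mul IP0 trmx0.
have h := @zdim_exact F gT G d db da (dual_mx r) (dual_mx rb) (dual_mx ra) P^T I^T frP.
have h1 : (da + \rank I^T)%N = d by rewrite mxrank_tr (eqP frI) addnC.
have h2 : (zdim G (dual_mx r) <= zdim G (dual_mx ra) + zdim G (dual_mx rb))%N.
  apply: (h (ker_exact frP P0 h1)) => x Gx;
  by rewrite /dual_mx -!trmx_mul ?homP ?homI ?groupV.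
rewrite /pf; move: h2 dE.
move: (zdim G (dual_mx r) : nat) (zdim G (dual_mx ra) : nat) (zdim G (dual_mx rb) : nat) => a b c; lia.
Qed.
End Exact.


Section Sec.
Variables (F : fieldType) (gT : finGroupType) (G : {group gT}).
Variables (d : nat) (R : mx_representation F G d).

Lemma sec_rank (X Y : 'M[F]_d) : (X <= Y)%MS ->
  (\rank <<in_factmod X Y>>%MS + \rank X)%N = \rank Y.
Proof. by move=> sXY; rewrite genmxE mxrank_in_factmod (addsmx_idPr sXY). Qed.

Definition secPhi (X Y : 'M[F]_d) : 'M[F]_(\rank <<in_factmod X Y>>%MS, d) :=
  @val_factmod F d X _ (@val_submod F _ <<in_factmod X Y>>%MS _ 1%:M).

Lemma PhiJ (X : 'M_d) (modX : mxmodule R X) (S : 'M_(\rank (cokermx X)))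
   (modS : mxmodule (factmod_repr modX) S) k (W : 'M_(k, \rank S)) x : x \in G ->
 (@val_factmod F d X k (@val_submod F _ S k (W *m submod_repr modS x))
    - val_factmod (val_submod W) *m R x <= X)%MS.
Proof.
move=> Gx; rewrite val_submodJ // val_factmodJ //.
set Z := val_factmod _ *m R x.
have e := add_sub_fact_mod X Z.
rewrite -{2}e opprD addrA addrC addrA addNr add0r.
by rewrite eqmx_opp val_submodP.
Qed.

Lemma secPhi_free X Y : row_free (secPhi X Y).
Proof.
apply/row_freeP; exists (in_factmod X 1%:M *m in_submod <<in_factmod X Y>>%MS 1%:M).
by rewrite mulmxA -in_factmodE -in_submodE val_factmodK val_submodK.
Qed.

Lemma secPhi_adds X Y : (X <= Y)%MS -> (X + secPhi X Y :=: Y)%MS.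
Proof.
move=> sXY; apply: eqmx_trans (in_factmodsK sXY); apply: adds_eqmx => //.
rewrite /secPhi val_factmodE (val_factmodE (in_factmod X Y)).
apply: eqmxMr; apply: eqmx_trans (val_submod1 _) _; exact: genmxE.
Qed.

Lemma secPhi_sub X Y : (X <= Y)%MS -> (secPhi X Y <= Y)%MS.
Proof. by move=> sXY; rewrite -(secPhi_adds sXY) addsmxSr. Qed.

Lemma secPhi_J X Y (modX : mxmodule R X) (modY : mxmodule R Y) x : x \in G ->
  (section_repr modX modY x *m secPhi X Y - secPhi X Y *m R x <= X)%MS.
Proof.
move=> Gx; have := PhiJ (section_module modX modY) 1%:M Gx.
rewrite mul1mx /secPhi val_factmodE val_submodE -mulmxA -val_factmodE; exact.
Qed.

Definition secPsi (X : 'M[F]_d) : 'M[F]_(d, \rank <<in_factmod X 1%:M>>%MS) :=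
  in_submod <<in_factmod X 1%:M>>%MS (in_factmod X 1%:M).

Lemma secPsi_full X : row_full (secPsi X).
Proof.
by rewrite /row_full mxrank_in_submod ?genmxE.
Qed.

Lemma secPsi_ker X : X *m secPsi X = 0.
Proof.
rewrite /secPsi in_submodE in_factmodE mul1mx mulmxA -in_factmodE -in_submodE.
by rewrite (eqP (_ : in_factmod X X == 0)) ?in_factmod_eq0 // linear0.
Qed.

Lemma secPsi_J X (modX : mxmodule R X) (mod1 : mxmodule R 1%:M) x : x \in G ->
  R x *m secPsi X = secPsi X *m section_repr modX mod1 x.
Proof.
move=> Gx; rewrite /secPsi -in_submodJ ?genmxE // -in_factmodJ //.
by rewrite mul1mx in_submodE (in_factmodE _ (R x)) [RHS]in_submodE mulmxA.
Qed.

Lemma sec_char (X Y : 'M[F]_d) (modX : mxmodule R X) (modY : mxmodule R Y)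
   k (T : mx_representation F G k) (E : 'M[F]_(k, d)) :
  (X <= Y)%MS -> (X + E :=: Y)%MS -> (k + \rank X)%N = \rank Y ->
  (forall x, x \in G -> (T x *m E - E *m R x <= X)%MS) ->
  mx_rsim T (section_repr modX modY).
Proof.
move=> sXY defY rk hom.
set S := <<in_factmod X Y>>%MS.
have sES : (in_factmod X E <= S)%MS.
  by rewrite genmxE submxMr // -defY addsmxSr.
exists (in_submod S (in_factmod X E)).
- by apply/eqP; rewrite -(eqn_add2r (\rank X)) rk sec_rank.
- rewrite /row_free mxrank_in_submod //; apply/eqP.
  apply/eqP; rewrite -(eqn_add2r (\rank X)) rk mxrank_in_factmod.
  by rewrite defY.
move=> x Gx; rewrite -in_submodJ // -in_factmodJ //.
rewrite in_submodE in_factmodE mulmxA -in_factmodE -in_submodE; congr (in_submod _ _).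
rewrite (in_factmodE _ E) mulmxA -in_factmodE.
apply/eqP; rewrite -subr_eq0 -linearB /= in_factmod_eq0; exact: hom.
Qed.

End Sec.


Section Lift.
Variables (F : fieldType) (gT : finGroupType) (G : {group gT}).
Variables (d : nat) (R : mx_representation F G d).

Lemma PhiE (X Y : 'M[F]_d) k (Y' : 'M_(k, \rank <<in_factmod X Y>>%MS)) :
  Y' *m secPhi X Y = val_factmod (val_submod Y').
Proof. by rewrite /secPhi val_factmodE (val_factmodE (val_submod Y')) mulmxA -val_submodE. Qed.

Variables (W U : 'M[F]_d) (modW : mxmodule R W) (modU : mxmodule R U).
Hypothesis sWU : (W <= U)%MS.
Local Notation kA := (\rank <<in_factmod W U>>%MS).
Local Notation A := (section_repr modW modU).

Definition liftm (Y : 'M[F]_kA) : 'M[F]_d := (W + Y *m secPhi W U)%MS.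

Lemma lift_module Y : mxmodule A Y -> mxmodule R (liftm Y).
Proof.
by move=> mY; rewrite /liftm PhiE (val_factmod_module modW) (val_submod_module (section_module modW modU)).
Qed.

Lemma rank_lift Y : \rank (liftm Y) = (\rank W + \rank Y)%N.
Proof.
rewrite /liftm mxrank_disjoint_sum; last first.
  apply/eqP; rewrite -submx0 -(capmx_compl W) capmxS //.
  by rewrite PhiE val_factmodP.
by rewrite mxrankMfree // secPhi_free.
Qed.

Lemma lift_iso (Y1 Y2 : 'M[F]_kA) (m1 : mxmodule A Y1) (m2 : mxmodule A Y2)
   (l1 : mxmodule R (liftm Y1)) (l2 : mxmodule R (liftm Y2)) :
  (Y1 <= Y2)%MS -> mx_rsim (section_repr m1 m2) (section_repr l1 l2).
Proof.
move=> s12.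
apply: (@sec_char F gT G d R _ _ l1 l2 _ _ (secPhi Y1 Y2 *m secPhi W U)).
- by rewrite /liftm addsmxS // submxMr.
- rewrite /liftm -addsmxA; apply: adds_eqmx => //.
  apply: eqmx_trans (eqmx_sym (addsmxMr _ _ _)) _.
  exact: eqmxMr (secPhi_adds s12).
- rewrite !rank_lift -(sec_rank s12); lia.
move=> x Gx.
have -> : section_repr m1 m2 x *m (secPhi Y1 Y2 *m secPhi W U) -
     secPhi Y1 Y2 *m secPhi W U *m R x =
   (section_repr m1 m2 x *m secPhi Y1 Y2 - secPhi Y1 Y2 *m A x) *m secPhi W U
   + secPhi Y1 Y2 *m (A x *m secPhi W U - secPhi W U *m R x).
  by rewrite mulmxBl mulmxBr !mulmxA addrA subrK.
rewrite addmx_sub //.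
  by rewrite /liftm (submx_trans _ (addsmxSr _ _)) // submxMr // secPhi_J.
apply: submx_trans (submxMl _ _) _.
by rewrite /liftm (submx_trans _ (addsmxSl _ _)) // secPhi_J.
Qed.

End Lift.


Section L4.
Variables (F : fieldType) (gT : finGroupType) (G : {group gT}).

Lemma pf_rsim n1 n2 (r1 : mx_representation F G n1) (r2 : mx_representation F G n2) :
  mx_rsim r1 r2 -> pf G r1 = pf G r2 /\ pf G (dual_mx r1) = pf G (dual_mx r2).
Proof.
move=> s; rewrite /pf (zdim_rsim s) (zdim_dual_rsim s) (mxrank_rsim s); by split.
Qed.

Lemma L4core e (B : mx_representation F G e) (Y : 'M_e) (mY : mxmodule B Y)
   (m0 : mxmodule B 0) (m1 : mxmodule B 1%:M) :
  pf G B <= pf G (section_repr m0 mY) + pf G (section_repr mY m1) /\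
  pf G (dual_mx B) <= pf G (dual_mx (section_repr m0 mY)) + pf G (dual_mx (section_repr mY m1)).
Proof.
have IP0 : secPhi 0 Y *m secPsi Y = 0.
  have /submxP[D ->] : (secPhi 0 Y <= Y)%MS by rewrite secPhi_sub ?sub0mx.
  by rewrite -mulmxA secPsi_ker mulmx0.
have dE : (\rank <<in_factmod 0 Y>>%MS + \rank <<in_factmod Y 1%:M>>%MS)%N = e.
  have := sec_rank (sub0mx e Y); have := sec_rank (submx1 Y).
  rewrite mxrank0 mxrank1; lia.
have homI x : x \in G -> secPhi 0 Y *m B x = section_repr m0 mY x *m secPhi 0 Y.
  move=> Gx; have := secPhi_J m0 mY Gx; rewrite submx0 subr_eq0 => /eqP ->//.
have homP x : x \in G -> B x *m secPsi Y = secPsi Y *m section_repr mY m1 x.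
  by move=> Gx; rewrite (secPsi_J mY m1).
split.
  exact: (pf_exact (secPhi_free 0 Y) (secPsi_full Y) IP0 dE homI homP).
rewrite addrC; exact: (pf_exact_dual (secPhi_free 0 Y) (secPsi_full Y) IP0 dE homI homP).
Qed.

Variables (d : nat) (R : mx_representation F G d).

Lemma L4 (X Y Z : 'M_d) (mX : mxmodule R X) (mY : mxmodule R Y) (mZ : mxmodule R Z) :
  (X <= Y)%MS -> (Y <= Z)%MS ->
  pf G (section_repr mX mZ) <= pf G (section_repr mX mY) + pf G (section_repr mY mZ) /\
  pf G (dual_mx (section_repr mX mZ)) <=
     pf G (dual_mx (section_repr mX mY)) + pf G (dual_mx (section_repr mY mZ)).
Proof.
move=> sXY sYZ; have sXZ := submx_trans sXY sYZ.
set B := section_repr mX mZ.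
set S := <<in_factmod X Z>>%MS.
have sYS : (in_factmod X Y <= S)%MS by rewrite genmxE submxMr.
set Y' := <<in_submod S (in_factmod X Y)>>%MS.
have mY' : mxmodule B Y'.
  rewrite (eqmx_module _ (genmxE _)) (in_submod_module (section_module mX mZ)) //.
  by rewrite (in_factmod_module mX) addsmx_module.
have m0 : mxmodule B (0 : 'M_(\rank S)) := mxmodule0 B _.
have m1 : mxmodule B 1%:M := mxmodule1 B.
have l0 := lift_module m0; have l1 := lift_module m1.
have lY := lift_module mY'.
have e0 : (liftm (W:=X) (U:=Z) 0 :=: X)%MS by rewrite /liftm mul0mx; apply: addsmx0.
have e1 : (liftm (W:=X) (U:=Z) 1%:M :=: Z)%MS by rewrite /liftm mul1mx; apply: secPhi_adds.
have eY : (liftm (W:=X) (U:=Z) Y' :=: Y)%MS.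
  rewrite /liftm; apply: eqmx_trans (in_factmodsK sXY); apply: adds_eqmx => //.
  apply: eqmx_trans (eqmxMr _ (genmxE _)) _.
  by rewrite PhiE in_submodK.
have s1 : mx_rsim (section_repr m0 mY') (section_repr mX mY).
  apply: mx_rsim_trans (lift_iso sXZ m0 mY' l0 lY (sub0mx _ _)) _.
  exact: section_eqmx.
have s2 : mx_rsim (section_repr mY' m1) (section_repr mY mZ).
  apply: mx_rsim_trans (lift_iso sXZ mY' m1 lY l1 (submx1 _)) _.
  exact: section_eqmx.
have [h1 h2] := L4core mY' m0 m1.
have [p1 q1] := pf_rsim s1; have [p2 q2] := pf_rsim s2.
by rewrite -p1 -p2 -q1 -q2; split.
Qed.

End L4.


Section Fix.
Variables (F : fieldType) (gT : finGroupType) (G : {group gT}).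

Lemma zdim_eq0 k (r : gT -> 'M[F]_k) : k = 0%N -> zdim G r = 0%N.
Proof.
move=> k0; have h : (zdim G r <= #|gT| * (1 * k))%N.
  by apply: leq_trans (dimvS (subvf _)) _; rewrite dimvf.
by move: h; rewrite [in X in (_ <= X)%N]k0 !muln0 leqn0 => /eqP.
Qed.

Lemma fixdim0 k (r : gT -> 'M[F]_k) :
  (forall v : 'rV_k, (forall x, x \in G -> v *m r x = v) -> v = 0) -> fixdim G r = 0%N.
Proof.
move=> H; apply/eqP; rewrite /fixdim dimv_eq0; apply/eqP/vspaceP=> v.
rewrite memv0; apply/idP/eqP=> [/memfixP/H //|->]; exact: mem0v.
Qed.

Lemma pf_ge0 k (r : gT -> 'M[F]_k) :
  (forall x y, x \in G -> y \in G -> r (x * y)%g = r x *m r y) ->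
  fixdim G r = 0%N -> 0 <= pf G r.
Proof.
move=> rM f0; have := dimvS (B1_sub_Z1 rM); rewrite B1_dim f0 subn0 /pf.
rewrite subr_ge0 lez_nat; exact.
Qed.

Lemma triv_sub_of_fixed d (R : mx_representation F G d) (u : 'rV_d) :
  u != 0 -> (forall x, x \in G -> u *m R x = u) -> has_trivial_submodule R.
Proof.
move=> nz fu.
have modu : mxmodule R u by apply/mxmoduleP=> x Gx; rewrite fu.
have modU : mxmodule R <<u>>%MS by rewrite (eqmx_module _ (genmxE u)).
exists <<u>>%MS, modU; apply/andP; split.
  rewrite genmxE eqn_leq rank_leq_row lt0n mxrank_eq0 //.
apply/forall_inP=> x Gx; apply/eqP; apply: (@val_submod_inj F d <<u>>%MS).
rewrite -[submod_repr modU x]mul1mx (val_submodJ modU) //.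
have /submxP[D ->] : (val_submod (1%:M : 'M_(\rank <<u>>%MS)) <= u)%MS.
  by rewrite -(genmxE u) val_submodP.
by rewrite -mulmxA fu.
Qed.

Lemma triv_quot_of_fixed d (R : mx_representation F G d) (c : 'M_(d, 1)) :
  c != 0 -> (forall x, x \in G -> R x *m c = c) -> has_trivial_quotient R.
Proof.
move=> nz fc.
have modK : mxmodule R (kermx c).
  apply/mxmoduleP=> x Gx; apply/sub_kermxP.
  by rewrite -mulmxA (fc x Gx) mulmx_ker.
exists (kermx c), modK; apply/andP; split.
  rewrite mxrank_coker mxrank_ker subKn ?rank_leq_row //.
  rewrite eqn_leq rank_leq_col lt0n mxrank_eq0 //.
apply/forall_inP=> x Gx; apply/eqP.
rewrite /= /factmod_mx -[RHS](val_factmodK (U := kermx c)).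
apply/eqP; rewrite -subr_eq0 -linearB /= in_factmod_eq0.
apply/sub_kermxP; rewrite mulmxBl -mulmxA (fc x Gx) subrr //.
Qed.

End Fix.


Section Key.
Variables (F : fieldType) (gT : finGroupType) (G : {group gT}).

Lemma pf_dim0 k (r : gT -> 'M[F]_k) : k = 0%N -> pf G r = 0.
Proof. by move=> k0; rewrite /pf zdim_eq0 // k0 subrr. Qed.

Lemma rank_sec_same d (X : 'M[F]_d) : \rank <<in_factmod X X>>%MS = 0%N.
Proof. by rewrite genmxE; apply/eqP; rewrite mxrank_eq0 in_factmod_eq0. Qed.

Variables (d : nat) (R : mx_representation F G d).

Lemma sec0_ge0 (Y : 'M_d) (m0 : mxmodule R 0) (mY : mxmodule R Y) :
  ~ has_trivial_submodule R -> 0 <= pf G (section_repr m0 mY).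
Proof.
move=> nsub; apply: pf_ge0; first by move=> x y Gx Gy; rewrite repr_mxM.
apply: fixdim0 => v fv; apply/eqP/negPn/negP=> nz; apply: nsub.
apply: (@triv_sub_of_fixed _ _ _ _ R (v *m secPhi 0 Y)).
  apply: contra nz => /eqP h; apply/eqP.
  by apply: (row_free_inj (secPhi_free 0 Y)); rewrite /= h mul0mx.
move=> x Gx; have := secPhi_J m0 mY Gx; rewrite submx0 subr_eq0 => /eqP e.
by rewrite -mulmxA -e mulmxA fv.
Qed.

Lemma sec1_dual_ge0 (X : 'M_d) (mX : mxmodule R X) (m1 : mxmodule R 1%:M) :
  ~ has_trivial_quotient R -> 0 <= pf G (dual_mx (section_repr mX m1)).
Proof.
move=> nquot; apply: pf_ge0; first by move=> x y Gx Gy; rewrite dual_repr_mxM.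
apply: fixdim0 => w fw; apply/eqP/negPn/negP=> nz; apply: nquot.
set s := section_repr mX m1.
have rc y : y \in G -> s y *m w^T = w^T.
  move=> Gy; have := fw (y^-1)%g; rewrite groupV /dual_mx invgK => /(_ Gy) e.
  by rewrite -{2}e trmx_mul trmxK.
apply: (@triv_quot_of_fixed _ _ _ _ R (secPsi X *m w^T)).
  case/row_fullP: (secPsi_full X) => B BP.
  apply: contra nz => /eqP h; apply/eqP; apply: trmx_inj.
  by rewrite trmx0 -[w^T]mul1mx -BP -mulmxA h mulmx0.
by move=> x Gx; rewrite mulmxA (secPsi_J mX m1 Gx) -mulmxA rc.
Qed.

End Key.


Section Series.
Variables (F : fieldType) (gT : finGroupType) (G : {group gT}).
Variables (n : nat) (rG : mx_representation F G n).
Variables (Us : seq 'M[F]_n) (cs : mx_composition_series rG Us).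

Definition sp i : int :=
  (H1dim G (series_repr i cs))%:Z - (is_trivial_repr (series_repr i cs))%:Z.

Lemma sp_pf i : (i < size Us)%N -> sp i = pf G (series_repr i cs).
Proof. by move=> lt; rewrite /sp H1_irr //; apply: mx_series_repr_irr. Qed.

Lemma sp_pfd i : factors_H1_selfdual rG -> full_series Us -> (i < size Us)%N ->
  sp i = pf G (dual_mx (series_repr i cs)).
Proof.
by move=> sd fu lt; rewrite /sp (sd _ cs fu i lt) H1_dual_irr //; apply: mx_series_repr_irr.
Qed.

Local Notation X i := ((0 :: Us)`_i).
Let modUs := proj1 cs.

Lemma sX i : (i < size Us)%N -> (X i <= X i.+1)%MS.
Proof. by move=> lt; case: (proj2 cs i lt) => /ltmxW. Qed.

Lemma sX_le i j : (i <= j <= size Us)%N -> (X i <= X j)%MS.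
Proof.
case/andP=> ij js; elim: j ij js => [|j IH]; first by rewrite leqn0 => /eqP->.
rewrite leq_eqVlt => /orP[/eqP->//|]; rewrite ltnS => ij js.
exact: submx_trans (IH ij (ltnW js)) (sX js).
Qed.

Lemma prefix_bound j : (j <= size Us)%N -> forall (m0 : mxmodule rG 0) (mj : mxmodule rG (X j)),
  pf G (section_repr m0 mj) <= \sum_(0 <= i < j) sp i.
Proof.
elim: j => [|j IH] lt m0 mj.
  by rewrite big_geq // pf_dim0 // rank_sec_same.
have ltj : (j < size Us)%N by [].
have [h _] := L4 m0 (mx_subseries_module' j modUs) mj (sub0mx _ _) (sX ltj).
apply: le_trans h _; rewrite big_nat_recr //= lerD ?IH ?(ltnW lt) //.
have -> : mj = mx_subseries_module j modUs := bool_irrelevance _ _.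
by rewrite -sp_pf.
Qed.

Lemma suffix_bound : factors_H1_selfdual rG -> full_series Us -> forall t j,
  (j + t)%N = size Us -> forall (mj : mxmodule rG (X j))
  (mL : mxmodule rG (X (size Us))),
  pf G (dual_mx (section_repr mj mL)) <= \sum_(j <= i < size Us) sp i.
Proof.
move=> sd fu; elim=> [|t IH] j e mj mL.
  rewrite addn0 in e; move: mj; rewrite e => mj.
  by rewrite big_geq // pf_dim0 // rank_sec_same.
have ltj : (j < size Us)%N by rewrite -e -addSnnS leq_addr.
have e' : (j.+1 + t)%N = size Us by rewrite addSnnS.
have [_ h] := L4 mj (mx_subseries_module' j.+1 modUs) mL (sX ltj) (sX_le (introT andP (conj ltj (leqnn _)))).
apply: le_trans h _; rewrite big_ltn // lerD ?IH //.
have -> : mj = mx_subseries_module' j modUs := bool_irrelevance _ _.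
have -> : mx_subseries_module' j.+1 modUs = mx_subseries_module j modUs := bool_irrelevance _ _.
by rewrite -sp_pfd.
Qed.

Lemma key : factors_H1_selfdual rG -> full_series Us ->
  ~ has_trivial_submodule rG -> ~ has_trivial_quotient rG ->
  forall j, (j <= size Us)%N ->
  0 <= \sum_(0 <= i < j) sp i /\ 0 <= \sum_(j <= i < size Us) sp i.
Proof.
move=> sd fu nsub nquot j le; split.
  have m0 : mxmodule rG 0 := mxmodule0 rG n.
  apply: le_trans (prefix_bound le m0 (mx_subseries_module' j modUs)).
  exact: sec0_ge0.
have mL := mx_subseries_module' (size Us) modUs.
have := suffix_bound sd fu (subnKC le) (mx_subseries_module' j modUs) mL.
apply: le_trans.
have m1 : mxmodule rG 1%:M := mxmodule1 rG.
have eL : (X (size Us) :=: 1%:M)%MS.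
  by apply/eqmxP; rewrite -last_nth.
have s := section_eqmx (mx_subseries_module' j modUs) (mx_subseries_module' j modUs) mL m1 (eqmx_refl _) eL.
have [_ ->] := pf_rsim s.
exact: sec1_dual_ge0.
Qed.

End Series.


Section Triv.
Variables (F : fieldType) (gT : finGroupType) (G : {group gT}) (p : nat).
Hypotheses (charFp : p \in [pchar F]) (OpG : Oup p G = G).

Lemma H1_triv d (r : gT -> 'M[F]_d) : (forall x, x \in G -> r x = 1%:M) ->
  H1dim G r = 0%N.
Proof.
move=> r1; rewrite /H1dim.
suff -> : Z1 G r = 0%VS by rewrite dimv0.
apply/vspaceP=> f; rewrite memv0; apply/idP/eqP=> [/memZ1P[H1 H2]|->]; last exact: mem0v.
have add x y : x \in G -> y \in G -> f (x * y)%g = f x + f y.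
  by move=> Gx Gy; rewrite H1 // r1 // mulmx1.
have f1 : f 1%g = 0.
  by apply: (@addrI _ (f 1%g)); rewrite -add ?group1 // mulg1 addr0.
have fX x k : x \in G -> f (x ^+ k)%g = f x *+ k.
  move=> Gx; elim: k => [|k IH]; first by rewrite expg0 f1 mulr0n.
  by rewrite expgS add ?groupX // IH mulrS.
set K := [set x in G | f x == 0].
have gK : group_set K.
  apply/group_setP; split; first by rewrite inE group1 f1 eqxx.
  move=> x y /setIdP[Gx /eqP fx] /setIdP[Gy /eqP fy].
  by rewrite inE groupM // add // fx fy addr0 eqxx.
have sGK : G \subset Group gK.
  rewrite -{1}OpG /Oup gen_subG; apply/subsetP=> x /setIdP[Gx p'x].
  rewrite inE Gx /=; have := fX x #[x]%g Gx; rewrite expg_order f1 => /esym/eqP.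
  rewrite -scaler_nat scaler_eq0 => /orP[|//].
  rewrite -(dvdn_pcharf charFp) => dvp.
  by move: p'x; rewrite /p_elt (p'natE _ (pcharf_prime charFp)) dvp.
apply/ffunP=> x; rewrite ffunE; case: (boolP (x \in G)) => [Gx|/H2 //].
by have := subsetP sGK x Gx; rewrite inE => /andP[_ /eqP].
Qed.

End Triv.


Lemma nth_cons_cat (T : Type) (x0 X : T) (L1 L2 : seq T) k :
  nth x0 (X :: L1 ++ L2) (size L1 + k) = nth x0 (last X L1 :: L2) k.
Proof. by elim: L1 X => [|a L1 IH] X //=; rewrite addSn /= IH. Qed.

Section Rel.
Variables (F : fieldType) (gT : finGroupType) (G : {group gT}).
Variables (n : nat) (rG : mx_representation F G n).

Definition relser (X : 'M[F]_n) (L : seq 'M[F]_n) :=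
  all (@mxmodule F gT G n rG n) L /\ (forall i, (i < size L)%N -> max_submod rG (X :: L)`_i L`_i).

Lemma rel_cat X L1 L2 : relser X L1 -> relser (last X L1) L2 -> relser X (L1 ++ L2).
Proof.
case=> m1 h1 [m2 h2]; split; first by rewrite all_cat m1.
move=> i; rewrite size_cat => lt.
case: (ltnP i (size L1)) => [lt1|le1].
  rewrite -cat_cons !nth_cat /= ltnS (ltnW lt1) lt1; exact: (h1 i lt1).
rewrite -(subnKC le1) nth_cons_cat nth_cat ltnNge leq_addr /= addKn.
by apply: h2; rewrite -(ltn_add2l (size L1)) subnKC.
Qed.

Lemma rel_eqmx X Y L : (X :=: Y)%MS -> relser X L -> relser Y L.
Proof.
move=> eXY [m h]; split=> // [[|i]] lt; last exact: (h i.+1 lt).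
by apply: max_submod_eqmx (h 0%N lt) => //.
Qed.

Section LiftSeries.
Variables (X Y : 'M[F]_n) (mX : mxmodule rG X) (mY : mxmodule rG Y).
Hypothesis sXY : (X <= Y)%MS.
Local Notation B := (section_repr mX mY).
Local Notation lift := (liftm (W:=X) (U:=Y)).

Lemma lift_sub A1 A2 : (A1 <= A2)%MS -> (lift A1 <= lift A2)%MS.
Proof. by move=> s; rewrite /liftm addsmxS // submxMr. Qed.

Lemma lift_eqmx A1 A2 : (A1 :=: A2)%MS -> (lift A1 :=: lift A2)%MS.
Proof. by move=> e; rewrite /liftm; apply: adds_eqmx => //; apply: eqmxMr. Qed.

Lemma lift0m : (lift 0 :=: X)%MS.
Proof. by rewrite /liftm mul0mx; apply: addsmx0. Qed.

Lemma lift1m : (lift 1%:M :=: Y)%MS.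
Proof. by rewrite /liftm mul1mx; apply: secPhi_adds. Qed.

Lemma lift_max A1 A2 : mxmodule B A1 -> mxmodule B A2 ->
  max_submod B A1 A2 -> max_submod rG (lift A1) (lift A2).
Proof.
move=> m1 m2 mx; have s12 : (A1 <= A2)%MS by case: mx => /ltmxW.
have l1 := lift_module m1; have l2 := lift_module m2.
apply/(max_submodP l1 l2 (lift_sub s12)).
apply: mx_rsim_irr (lift_iso sXY m1 m2 l1 l2 s12) _.
exact/(max_submodP m1 m2 s12).
Qed.

Variables (T : seq 'M[F]_(\rank <<in_factmod X Y>>%MS)) (csT : mx_composition_series B T).

Lemma rel_lift : relser X (map lift T).
Proof.
case: csT => mT hT; split.
  by rewrite all_map; apply/allP=> A AT; apply: lift_module; apply: (allP mT).
move=> i; rewrite size_map => lt.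
have m1 := mx_subseries_module' i mT; have m2 := mx_subseries_module i mT.
have := lift_max m1 m2 (hT i lt); rewrite (nth_map 0) //.
apply: max_submod_eqmx => //; case: i lt {m1 m2} => [|i] lt /=; first exact: lift0m.
by rewrite (nth_map 0) // ltnW.
Qed.

Lemma last_lift : full_series T -> (last X (map lift T) :=: Y)%MS.
Proof.
move=> /eqmxP fT; case: T csT fT => [|t T'] _ /= fT.
  have : \rank <<in_factmod X Y>>%MS = 0%N.
    by rewrite -(mxrank1 F (\rank <<in_factmod X Y>>%MS)) -fT mxrank0.
  move=> r0; have := sec_rank sXY; rewrite r0 add0n => rXY.
  have := mxrank_leqif_sup sXY; rewrite rXY => /leqif_refl sYX.
  by apply/eqmxP/andP; split.
by rewrite last_map; apply: eqmx_trans (lift_eqmx fT) lift1m.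
Qed.

End LiftSeries.
End Rel.


Section Main.
Variables (F : fieldType) (gT : finGroupType) (G : {group gT}).
Variables (n : nat) (rG : mx_representation F G n).

Lemma sp_sum (Us : seq 'M[F]_n) (cs : mx_composition_series rG Us) :
  series_pressure cs = \sum_(0 <= i < size Us) sp cs i.
Proof. by rewrite /series_pressure big_mkord. Qed.

Lemma sp_split (Us : seq 'M[F]_n) (cs : mx_composition_series rG Us) j :
  (j <= size Us)%N ->
  series_pressure cs = \sum_(0 <= i < j) sp cs i + \sum_(j <= i < size Us) sp cs i.
Proof. by move=> le; rewrite sp_sum -big_cat_nat. Qed.

Lemma sp_rsim (Us Vs : seq 'M[F]_n) (cs : mx_composition_series rG Us)
  (cs' : mx_composition_series rG Vs) i j : (i < size Us)%N -> (j < size Vs)%N ->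
  mx_rsim (series_repr i cs) (series_repr j cs') -> sp cs i = sp cs' j.
Proof.
by move=> li lj s; rewrite !sp_pf //; have [-> _] := pf_rsim s.
Qed.

Lemma JH_pressure (Us Vs : seq 'M[F]_n) (cs : mx_composition_series rG Us)
  (cs' : mx_composition_series rG Vs) :
  full_series Us -> full_series Vs -> series_pressure cs = series_pressure cs'.
Proof.
move=> /eqmxP f1 /eqmxP f2.
have [e [p hp]] := mx_JordanHolder cs cs' (eqmx_trans f1 (eqmx_sym f2)).
rewrite /series_pressure -/(sp cs) -/(sp cs').
transitivity (\sum_(i < size Us) sp cs' (p i)).
  apply: eq_bigr => i _; apply: sp_rsim (hp i) => //; rewrite -e //.
transitivity (\sum_(i < size Us) sp cs' i).
  by rewrite [RHS](reindex_inj (@perm_inj _ p)).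
by rewrite -!(big_mkord xpredT (sp cs')) e.
Qed.

End Main.

Section Main2.
Variables (F : fieldType) (gT : finGroupType) (G : {group gT}).
Variables (n : nat) (rG : mx_representation F G n).

Lemma last_eqmx (a b : 'M[F]_n) L : (a :=: b)%MS -> (last a L :=: last b L)%MS.
Proof. by case: L => //= *; apply: eqmx_refl. Qed.

Lemma part1 : factors_H1_selfdual rG -> ~ has_trivial_submodule rG ->
  ~ has_trivial_quotient rG ->
  forall (Us : seq 'M_n) (cs : mx_composition_series rG Us), full_series Us ->
  forall (W U : 'M_n) (modW : mxmodule rG W) (modU : mxmodule rG U), (W <= U)%MS ->
  forall (Vs : seq 'M_(\rank <<in_factmod W U>>%MS))
     (csA : mx_composition_series (section_repr modW modU) Vs),
  full_series Vs ->
  - series_pressure cs <= series_pressure csA <= series_pressure cs.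
Proof.
move=> sd nsub nquot Us cs fu W U modW modU sWU Vs csA fuA.
have m0 : mxmodule rG (0 : 'M_n) := mxmodule0 rG n.
have m1 : mxmodule rG (1%:M : 'M_n) := mxmodule1 rG.
apply: (mx_Schreier (rG := section_repr m0 modW) (U := [::]) isT isT) => -[T1 [csT1 fT1 _]].
apply: (mx_Schreier (rG := section_repr modU m1) (U := [::]) isT isT) => -[T3 [csT3 fT3 _]].
have fuT1 : full_series T1 by apply/eqmxP.
have fuT3 : full_series T3 by apply/eqmxP.
set L1 := map (liftm (W:=0) (U:=W)) T1.
set L2 := map (liftm (W:=W) (U:=U)) Vs.
set L3 := map (liftm (W:=U) (U:=1%:M)) T3.
have r1 : relser rG 0 L1 := rel_lift (sub0mx _ W) csT1.
have r2 : relser rG W L2 := rel_lift sWU csA.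
have r3 : relser rG U L3 := rel_lift (submx1 U) csT3.
have e1 : (last 0 L1 :=: W)%MS := last_lift (sub0mx _ W) csT1 fuT1.
have e2 : (last W L2 :=: U)%MS := last_lift sWU csA fuA.
have e3 : (last U L3 :=: 1%:M)%MS := last_lift (submx1 U) csT3 fuT3.
have e12 : (last (last 0 L1) L2 :=: U)%MS := eqmx_trans (last_eqmx L2 e1) e2.
have r23 : relser rG (last 0 L1) (L2 ++ L3).
  apply: rel_cat; first exact: rel_eqmx (eqmx_sym e1) r2.
  exact: rel_eqmx (eqmx_sym e12) r3.
have cs' : mx_composition_series rG (L1 ++ L2 ++ L3) := rel_cat r1 r23.
have fu' : full_series (L1 ++ L2 ++ L3).
  apply/eqmxP; rewrite !last_cat; exact: eqmx_trans (last_eqmx L3 e12) e3.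
have PJ := JH_pressure cs cs' fu fu'.
set o1 := size L1; set o2 := size L2.
have sz : size (L1 ++ L2 ++ L3) = (o1 + o2 + size L3)%N by rewrite !size_cat addnA.
have mid : \sum_(o1 <= k < o1 + o2) sp cs' k = series_pressure csA.
  rewrite sp_sum -{1}[o1]add0n big_addn addKn.
  have -> : o2 = size Vs by rewrite /o2 size_map.
  apply: eq_big_nat => i /andP[_ lti].
  have lti' : (i + o1 < size (L1 ++ L2 ++ L3))%N.
    rewrite sz; have : o2 = size Vs by rewrite /o2 size_map.
    move: lti; clear -i; lia.
  have eA : (liftm (W:=W) (U:=U) (0 :: Vs)`_i :=: (0 :: L1 ++ L2 ++ L3)`_(i + o1))%MS.
    rewrite addnC nth_cons_cat; case: (i) lti => [|j] lt /=.
      exact: eqmx_trans (lift0m W U) (eqmx_sym e1).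
    by rewrite nth_cat /L2 size_map (ltnW lt) (nth_map 0) ?(ltnW lt).
  have eB : (liftm (W:=W) (U:=U) Vs`_i :=: (L1 ++ L2 ++ L3)`_(i + o1))%MS.
    by rewrite addnC nth_cat ltnNge leq_addr /= addKn nth_cat /L2 size_map lti (nth_map 0).
  have m'i := mx_subseries_module' i (proj1 csA).
  have mi := mx_subseries_module i (proj1 csA).
  have sA : ((0 :: Vs)`_i <= Vs`_i)%MS by case: (proj2 csA i lti) => /ltmxW.
  have l' := lift_module m'i; have l := lift_module mi.
  have s1 := lift_iso sWU m'i mi l' l sA.
  have s2 := section_eqmx l' (mx_subseries_module' (i + o1) (proj1 cs')) l
      (mx_subseries_module (i + o1) (proj1 cs')) eA eB.
  rewrite !sp_pf //; have [-> _] := pf_rsim (mx_rsim_trans s1 s2); by [].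
have le1 : (o1 <= size (L1 ++ L2 ++ L3))%N by rewrite sz -addnA leq_addr.
have le2 : (o1 + o2 <= size (L1 ++ L2 ++ L3))%N by rewrite sz leq_addr.
have [k1 k2] := key cs' sd fu' nsub nquot le1.
have [k3 k4] := key cs' sd fu' nsub nquot le2.
rewrite PJ (sp_split cs' le1) -mid.
rewrite (@big_cat_nat _ _ _ (o1 + o2) o1) ?leq_addr // in k2.
rewrite (@big_cat_nat _ _ _ o1 0 (o1 + o2)) ?leq_addr // in k3.
rewrite (@big_cat_nat _ _ _ (o1 + o2) o1) ?leq_addr //.
move: k1 k2 k3 k4.
move: (\sum_(0 <= i < o1) sp cs' i) (\sum_(o1 <= i < o1 + o2) sp cs' i)
      (\sum_(o1 + o2 <= i < size (L1 ++ L2 ++ L3)) sp cs' i) => a b c.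
move=> h1 h2 h3 h4; have {}h2 : 0 <= b + c := h2; have {}h3 : 0 <= a + b := h3.
change (- (a + (b + c)) <= b <= a + (b + c)); apply/andP; split; lia.
Qed.

End Main2.


Section P23.
Variables (F : fieldType) (gT : finGroupType) (G : {group gT}).
Variables (n : nat) (rG : mx_representation F G n).

Lemma part23 (Us : seq 'M[F]_n) (cs : mx_composition_series rG Us) i :
  factors_H1_selfdual rG -> full_series Us -> (i < size Us)%N ->
  ~ has_trivial_submodule rG -> ~ has_trivial_quotient rG ->
  sp cs i <= series_pressure cs /\ 0 <= series_pressure cs + sp cs i.
Proof.
move=> sd fu lt nsub nquot.
have [k1 k2] := key cs sd fu nsub nquot (ltnW lt).
have [k3 k4] := key cs sd fu nsub nquot lt.
rewrite (sp_split cs (ltnW lt)).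
rewrite big_ltn // in k2; rewrite big_nat_recr //= in k3.
rewrite [\sum_(i <= _ < _) _]big_ltn //.
move: k1 k2 k3 k4.
move: (\sum_(0 <= j < i) sp cs j) (\sum_(i.+1 <= j < size Us) sp cs j) (sp cs i) => a b c.
move=> h1 h2 h3 h4; have {}h2 : 0 <= c + b := h2; have {}h3 : 0 <= a + c := h3.
change (c <= a + (c + b) /\ 0 <= a + (c + b) + c); split; lia.
Qed.

Lemma sp_triv (p : nat) (charFp : p \in [pchar F]) (OpG : Oup p G = G)
  (Us : seq 'M[F]_n) (cs : mx_composition_series rG Us) i :
  is_trivial_repr (series_repr i cs) -> sp cs i = -1 /\ H1dim G (series_repr i cs) = 0%N.
Proof.
move=> t; have H0 : H1dim G (series_repr i cs) = 0%N.
  apply: (H1_triv charFp OpG) => x Gx.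
  by case/andP: t => _ /forall_inP /(_ x Gx) /eqP.
by rewrite /sp H0 t; split.
Qed.

End P23.

End PilotHelpers.
Import PilotHelpers.

Theorem proposition1p9 (F : fieldType) (p : nat) (gT : finGroupType) (G : {group gT})
    (charFp : p \in [pchar F]) (OpG : Oup p G = G) :
  (* main statement *)
  (forall (n : nat) (rG : mx_representation F G n),
     factors_H1_selfdual rG ->
     has_trivial_factor rG ->
     ~ has_trivial_submodule rG ->
     ~ has_trivial_quotient rG ->
     forall (Us : seq 'M[F]_n) (cs : mx_composition_series rG Us),
       full_series Us ->
     forall (W U : 'M[F]_n) (modW : mxmodule rG W) (modU : mxmodule rG U),
       (W <= U)%MS ->
     forall (Vs : seq 'M[F]_(\rank <<in_factmod W U>>%MS))
            (csA : mx_composition_series (section_repr modW modU) Vs),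
       full_series Vs ->
       - series_pressure cs <= series_pressure csA <= series_pressure cs)
  /\
  (* first consequence *)
  (forall (n : nat) (rG : mx_representation F G n),
     factors_H1_selfdual rG ->
     forall (Us : seq 'M[F]_n) (cs : mx_composition_series rG Us),
       full_series Us ->
       (exists2 i : nat, (i < size Us)%N & is_trivial_repr (series_repr i cs)) ->
       series_pressure cs <= 0 ->
       has_trivial_submodule rG \/ has_trivial_quotient rG)
  /\
  (* second consequence *)
  (forall (n : nat) (rG : mx_representation F G n),
     factors_H1_selfdual rG ->
     forall (Us : seq 'M[F]_n) (cs : mx_composition_series rG Us),
       full_series Us ->
       (exists2 i : nat, (i < size Us)%N &
          series_pressure cs < (H1dim G (series_repr i cs))%:Z) ->
       has_trivial_submodule rG \/ has_trivial_quotient rG).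
Proof.
split.
  move=> n rG sd _ nsub nquot Us cs fu W U modW modU sWU Vs csA fuA.
  exact: part1.
split.
  move=> n rG sd Us cs fu [i lti tri] P0.
  case: (classic (has_trivial_submodule rG)) => [h|nsub]; first by left.
  case: (classic (has_trivial_quotient rG)) => [h|nquot]; first by right.
  exfalso; have [_ h2] := part23 cs sd fu lti nsub nquot.
  have [e _] := sp_triv charFp OpG tri.
  move: h2 P0; rewrite e; move: (series_pressure cs) => P; lia.
move=> n rG sd Us cs fu [i lti lt].
case: (classic (has_trivial_submodule rG)) => [h|nsub]; first by left.
case: (classic (has_trivial_quotient rG)) => [h|nquot]; first by right.
exfalso; have [h1 h2] := part23 cs sd fu lti nsub nquot.
case: (boolP (is_trivial_repr (series_repr i cs))) => tri.
  have [e H0] := sp_triv charFp OpG tri.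
  move: h2 lt; rewrite e H0; move: (series_pressure cs) => P; lia.
move: h1 lt; rewrite /sp (negbTE tri).
move: (series_pressure cs) (H1dim G (series_repr i cs)) => P h; lia.
Qed.
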